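(* Let $\boldsymbol\Sigma$ be a stacky fan with fan $\Sigma$, and let $\sigma\in\Sigma$. Then, as subsets of $X(\widetilde\Sigma)$, $\widetilde L_\sigma=\mathbb{V}(\widetilde I_\sigma)\cap X(\widetilde\Sigma)$.
   Context: Work over $\mathbb{C}$. A stacky fan $\boldsymbol\Sigma=(N,\Sigma,(v_1,\dots,v_n))$ consists of a finitely generated abelian group $N$, a fan $\Sigma$ in $N_{\mathbb{R}}$ with rays $\rho_1,\dots,\rho_n$ spanning $N_{\mathbb{R}}$, and $v_i\in N$ with image on $\rho_i$. Let $\bar N=N/\mathrm{torsion}$ and $X(\Sigma)$ the toric variety of $\Sigma$; for a cone $\sigma$, $V(\sigma)$ is the closure of the torus orbit of the distinguished point $\gamma_\sigma$. With $x^{\hat\sigma}=\prod_{\rho_i\notin\sigma(1)}x_i$ and $Z_\Sigma=\mathbb{V}(x^{\hat\sigma}:\sigma\in\Sigma)\subset\mathbb{A}^n$, the Cox space is $X(\widetilde\Sigma)=\mathbb{A}^n\smallsetminus Z_\Sigma$, and $q:X(\widetilde\Sigma)\to X(\Sigma)$ is the toric morphism induced by $\mathbb{Z}^n\to\bar N$, $e_i\mapsto$ image of $v_i$ (a good quotient for the group $G_{\boldsymbol\Sigma}$). Define $\widetilde L_\sigma=q^{-1}(V(\sigma))$. For a cone $\mu\in\Sigma$ containing $\sigma$, let $\widetilde I_{\mu,\sigma}\subset\mathbb{C}[x_1,\dots,x_n]$ be the ideal generated by the monomials $x^{\hat\tau}_\mu=\prod_{\rho_i\in\mu(1)\smallsetminus\tau(1)}x_i$,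 where $\tau$ runs over all proper faces of $\mu$ not containing $\sigma$. Let $\widetilde I_\sigma=\bigcap_{\mu\in\Sigma,\ \mu\supseteq\sigma}\widetilde I_{\mu,\sigma}$. *)

(* Defs.v *)
(* N-bar = Z^d (lattice points are {ffun 'I_d -> int}), M = its dual (same type,
   paired by the dot product), N_R = R^d with R the Stdlib reals (a realType via
   Rstruct), the base field is C = R[i] (mathcomp-real-closed), polynomial ring
   C[x_1..x_n] = {mpoly CC[n]} (multinomials). *)
From mathcomp Require Import all_boot all_algebra.
From mathcomp Require Import Rstruct.
From mathcomp Require Import complex.
From mathcomp Require Import mpoly.
Set Implicit Arguments.
Unset Strict Implicit.
Unset Printing Implicit Defensive.
Import GRing.Theory Num.Theory.
Local Open Scope ring_scope.

Definition RR := Rdefinitions.R.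
Definition CCC := (Rdefinitions.R)[i].

Section Toric.
Variables (d n : nat).

Definition lat := {ffun 'I_d -> int}.
Definition ipair (m u : lat) : int := \sum_(k < d) m k * u k.
Definition rpair (m u : 'I_d -> RR) : RR := \sum_(k < d) m k * u k.

Variable b : 'I_n -> lat. (* images in N-bar of the v_i; rho_i = R_{>=0} b_i *)

Definition breal (i : 'I_n) : 'I_d -> RR := fun k => (b i k)%:~R.

Definition coneR (S : {set 'I_n}) (u : 'I_d -> RR) : Prop :=
  exists lam : 'I_n -> RR,
    (forall i, 0 <= lam i) /\ (forall i, i \notin S -> lam i = 0) /\
    forall k, u k = \sum_(i < n) lam i * breal i k.

Definition faceR (tau sigma : ('I_d -> RR) -> Prop) : Prop :=
  exists m : 'I_d -> RR, (forall u, sigma u -> 0 <= rpair m u) /\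
    forall u, tau u <-> (sigma u /\ rpair m u = 0).

(* Sig : a fan in N_R whose cones are described by the sets of indices of
   their rays; rho_1..rho_n are its rays and they span N_R. *)
Definition is_fan (Sig : {set {set 'I_n}}) : Prop :=
  (forall i, b i != 0) /\
  (forall i, [set i] \in Sig) /\
  (forall S, S \in Sig -> forall j, coneR S (breal j) <-> j \in S) /\
  (forall S, S \in Sig -> forall u, coneR S u -> coneR S (fun k => - u k) ->
             forall k, u k = 0) /\
  (forall S, S \in Sig -> forall F, faceR F (coneR S) ->
             exists2 S', S' \in Sig & forall u, coneR S' u <-> F u) /\
  (forall S S', S \in Sig -> S' \in Sig ->
      faceR (fun u => coneR S u /\ coneR S' u) (coneR S) /\
      faceR (fun u => coneR S u /\ coneR S' u) (coneR S')) /\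
  (forall u : 'I_d -> RR, exists lam : 'I_n -> RR,
      forall k, u k = \sum_(i < n) lam i * breal i k).

Variable Sig : {set {set 'I_n}}.

Definition dualM (S : {set 'I_n}) (m : lat) : Prop := forall i, i \in S -> 0 <= ipair m (b i).
Definition perpM (S : {set 'I_n}) (m : lat) : bool := [forall i in S, ipair m (b i) == 0].

(* points of the affine chart U_sigma = Hom_monoid(sigma^vee \cap M, (C, * )) *)
Definition chart_pt (S : {set 'I_n}) (g : lat -> CCC) : Prop :=
  [/\ S \in Sig, g 0 = 1 &
      forall m m', dualM S m -> dualM S m' -> g (m + m') = g m * g m'].

(* a point of X(Sig) is represented by a cone S of Sig and a point of U_S;
   two representatives give the same point of X(Sig) iff they come from a
   common point of U_(S \cap S') (the gluing along U_S \cap U_S' = U_(S\cap S')). *)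
Definition same_pt (S : {set 'I_n}) (g : lat -> CCC) (S' : {set 'I_n}) (g' : lat -> CCC) : Prop :=
  exists g'', [/\ chart_pt (S :&: S') g'',
                  (forall m, dualM S m -> g m = g'' m) &
                  (forall m, dualM S' m -> g' m = g'' m)].

(* regular functions on U_S: finite C-linear combinations of characters chi^m, m in S^vee \cap M *)
Definition regular (S : {set 'I_n}) (f : seq (CCC * lat)) : Prop :=
  forall c, c \in f -> dualM S c.2.
Definition evalf (f : seq (CCC * lat)) (g : lat -> CCC) : CCC :=
  \sum_(c <- f) c.1 * g c.2.

Definition chi (t : 'I_d -> CCC) (m : lat) : CCC := \prod_(k < d) t k ^ m k.

Definition gamma (S : {set 'I_n}) (m : lat) : CCC := if perpM S m then 1 else 0.

Definition orbit_pt (S : {set 'I_n}) (t : 'I_d -> CCC) (m : lat) : CCC := chi t m * gamma S m.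

(* V(sigma): Zariski closure in X(Sig) of the orbit T . gamma_sigma.  The point
   (P,gp) is in the closure iff every basic open neighbourhood D(f) of it
   (f regular on a chart U_S containing the point) meets the orbit. *)
Definition inV (sigma : {set 'I_n}) (P : {set 'I_n}) (gp : lat -> CCC) : Prop :=
  chart_pt P gp /\
  forall S g, chart_pt S g -> same_pt S g P gp ->
    forall f, regular S f -> evalf f g != 0 ->
      exists t : 'I_d -> CCC, (forall k, t k != 0) /\
        exists ga, [/\ chart_pt S ga, same_pt S ga sigma (orbit_pt sigma t) &
                       evalf f ga != 0].

(* the monomials x^{sigma-hat} and Z_Sigma, X(Sigma-tilde) = A^n \ Z_Sigma *)
Definition xhat (S : {set 'I_n}) : {mpoly CCC[n]} := \prod_(i < n | i \notin S) 'X_i.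
Definition inXtilde (x : 'I_n -> CCC) : Prop :=
  ~ (forall S, S \in Sig -> (xhat S).@[x] = 0).

(* the toric morphism q : X(Sigma-tilde) -> X(Sigma) induced by e_i |-> b_i, in the
   chart U_S (valid when x_i <> 0 for all i notin S): chi^m |-> prod_i x_i^<m,b_i> *)
Definition qcoord (x : 'I_n -> CCC) (m : lat) : CCC := \prod_(i < n) x i ^ ipair m (b i).

Definition inLtilde (sigma : {set 'I_n}) (x : 'I_n -> CCC) : Prop :=
  exists2 S, S \in Sig & (forall i, i \notin S -> x i != 0) /\ inV sigma S (qcoord x).

Definition xhat_rel (mu tau : {set 'I_n}) : {mpoly CCC[n]} := \prod_(i < n | i \in mu :\: tau) 'X_i.

Definition Igen_index (mu sigma tau : {set 'I_n}) : Prop :=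
  [/\ tau \in Sig, faceR (coneR tau) (coneR mu), ~ (forall u, coneR tau u <-> coneR mu u) &
      ~ (forall u, coneR sigma u -> coneR tau u)].

Definition in_Imu (mu sigma : {set 'I_n}) (p : {mpoly CCC[n]}) : Prop :=
  exists a : {set 'I_n} -> {mpoly CCC[n]},
    (forall tau, ~ Igen_index mu sigma tau -> a tau = 0) /\
    (p = \sum_(tau : {set 'I_n}) (a tau * xhat_rel mu tau)).

Definition in_Itilde (sigma : {set 'I_n}) (p : {mpoly CCC[n]}) : Prop :=
  forall mu, mu \in Sig -> (forall u, coneR sigma u -> coneR mu u) -> in_Imu mu sigma p.

Definition in_VItilde (sigma : {set 'I_n}) (x : 'I_n -> CCC) : Prop :=
  forall p, in_Itilde sigma p -> p.@[x] = 0.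

End Toric.

(* Main.v *)
Require Import Defs.
From mathcomp Require Import all_boot all_algebra.
From mathcomp Require Import Rstruct complex mpoly.
From mathcomp Require Import all_order ring lra.
Import Order.TTheory GRing.Theory Num.Theory.
Local Open Scope ring_scope.

Section Approx.
Variables (d n : nat) (b : 'I_n -> lat d).

Lemma rat_int_vec (m' : 'I_d -> rat) :
  exists2 D : int, 0 < D & exists m : lat d, forall k, (m k)%:~R = D%:~R * m' k.
Proof.
exists (\prod_k denq (m' k)).
  by apply: prodr_gt0 => k _; exact: denq_gt0.
exists [ffun k => (\prod_(l | l != k) denq (m' l)) * numq (m' k)] => k.
rewrite ffunE [X in _ = X%:~R * _](bigD1 k) //= !intrM numqE.
by ring.
Qed.


Lemma floor_dist (y : RR) : `|(Num.floor y)%:~R - y| <= 1.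
Proof.
rewrite ler_distl; have := floor_itv y; rewrite intrD => /andP[h1 h2].
apply/andP; split; lra.
Qed.

Lemma ratapprox (E P : {set 'I_n}) (m0 : 'I_d -> RR) :
  (forall i, i \in E -> rpair m0 (breal b i) = 0) ->
  (forall i, i \in P -> 0 < rpair m0 (breal b i)) ->
  exists m : lat d, (forall i, i \in E -> ipair m (b i) = 0) /\
                    (forall i, i \in P -> 0 < ipair m (b i)).
Proof.
move=> HE HP.
pose B : 'M[rat]_(d, n) := \matrix_(k, i) (if i \in E then (b i k)%:~R else 0).
pose K := kermx B.
have HK : K *m B = 0 := mulmx_ker B.
pose m0r : 'rV[RR]_d := \row_k m0 k.
have Hm0 : m0r *m map_mx ratr B = 0.
  apply/rowP => i; rewrite !mxE.
  case: (boolP (i \in E)) => HiE.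
    rewrite -[RHS](HE i HiE) /rpair; apply: eq_bigr => k _.
    by rewrite !mxE HiE ratr_int.
  by rewrite big1 // => k _; rewrite !mxE (negbTE HiE) rmorph0 mulr0.
have : (m0r <= map_mx ratr K)%MS by rewrite map_kermx; apply/sub_kermxP.
case/submxP => u Hu.
pose c i l := \sum_k ratr (K l k) * (b i k)%:~R : RR.
have Hdel : forall i, rpair m0 (breal b i) = \sum_l u 0 l * c i l.
  move=> i; rewrite /rpair /c.
  transitivity (\sum_k (\sum_l u 0 l * ratr (K l k)) * (b i k)%:~R).
    apply: eq_bigr => k _; congr (_ * _).
    by move: (congr1 (fun M : 'rV[RR]_d => M 0 k) Hu); rewrite !mxE => ->; apply: eq_bigr => l _; rewrite mxE.
  under eq_bigr do rewrite big_distrl /=.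
  rewrite exchange_big /=; apply: eq_bigr => l _.
  by rewrite big_distrr /=; apply: eq_bigr => k _; rewrite -mulrA.
pose Cb i := \sum_l `|c i l|.
pose N := (\sum_(i in P) Num.bound (Cb i / rpair m0 (breal b i)))%N.
have HN : forall i, i \in P -> Cb i < N%:R * rpair m0 (breal b i).
  move=> i HiP; rewrite -ltr_pdivrMr; last exact: HP.
  apply: (lt_le_trans (archi_boundP _)).
    by apply: divr_ge0; [apply: sumr_ge0 => l _ | apply: ltW; apply: HP].
  by rewrite ler_nat /N (bigD1 i) //= leq_addr.
pose z l := Num.floor (N%:R * u 0 l).
pose m' k := \sum_l (z l)%:~R * K l k.
have HmE : forall i, i \in E -> \sum_k m' k * (b i k)%:~R = 0.
  move=> i HiE.
  transitivity (\sum_l (z l)%:~R * (K *m B) l i).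
    rewrite /m'; under eq_bigr do rewrite big_distrl /=.
    rewrite exchange_big /=; apply: eq_bigr => l _; rewrite !mxE big_distrr /=.
    by apply: eq_bigr => k _; rewrite !mxE HiE mulrA.
  by rewrite HK big1 // => l _; rewrite mxE mulr0.
have HmP : forall i, i \in P -> 0 < \sum_k m' k * (b i k)%:~R.
  move=> i HiP; rewrite -(ltr_rat RR) rmorph0.
  have -> : ratr (\sum_k m' k * (b i k)%:~R) = \sum_l (z l)%:~R * c i l.
    rewrite rmorph_sum /m' /c; under eq_bigr do rewrite rmorphM rmorph_sum big_distrl /=.
    rewrite exchange_big /=; apply: eq_bigr => l _; rewrite big_distrr /=.
    by apply: eq_bigr => k _; rewrite !rmorphM !rmorph_int -mulrA.
  have H1 : - Cb i <= \sum_l ((z l)%:~R - N%:R * u 0 l) * c i l.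
    rewrite /Cb -sumrN; apply: ler_sum => l _; apply: lerNnormlW.
    rewrite normrM; apply: ler_piMl => //; exact: floor_dist.
  have H2 : \sum_l (z l)%:~R * c i l =
     \sum_l ((z l)%:~R - N%:R * u 0 l) * c i l + N%:R * rpair m0 (breal b i).
    rewrite Hdel mulr_sumr -big_split /=; apply: eq_bigr => l _; ring.
  rewrite H2; have := HN i HiP; lra.
have [D HD [m Hm]] := rat_int_vec m'.
have Hpair : forall i, (ipair m (b i))%:~R = D%:~R * \sum_k m' k * (b i k)%:~R :> rat.
  move=> i; rewrite /ipair rmorph_sum mulr_sumr; apply: eq_bigr => k _.
  by rewrite rmorphM /= Hm mulrA.
exists m; split.
  by move=> i HiE; apply/eqP; rewrite -(intr_eq0 rat) Hpair HmE // mulr0.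
move=> i HiP; rewrite -(ltr0z rat) Hpair; apply: mulr_gt0; last exact: HmP.
by rewrite ltr0z.
Qed.

End Approx.

Section Fan.
Variables (d n : nat) (b : 'I_n -> lat d) (Sig : {set {set 'I_n}}).
Hypothesis Hfan : is_fan b Sig.

Lemma ffD (m m' : lat d) k : (m + m') k = m k + m' k.
Proof. by rewrite ffunE. Qed.
Lemma ffN (m : lat d) k : (- m) k = - m k.
Proof. by rewrite ffunE. Qed.
Lemma ff0 k : (0 : lat d) k = 0.
Proof. by rewrite ffunE. Qed.

Lemma ipairD (m m' v : lat d) : ipair (m + m') v = ipair m v + ipair m' v.
Proof. by rewrite /ipair -big_split; apply: eq_bigr => k _; rewrite ffD mulrDl. Qed.
Lemma ipairN (m v : lat d) : ipair (- m) v = - ipair m v.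
Proof. by rewrite /ipair -sumrN; apply: eq_bigr => k _; rewrite ffN mulNr. Qed.
Lemma ipair0 (v : lat d) : ipair 0 v = 0.
Proof. by rewrite /ipair big1 // => k _; rewrite ff0 mul0r. Qed.

Lemma fan_ray (S : {set 'I_n}) (j : 'I_n) : S \in Sig -> coneR b S (breal b j) <-> j \in S.
Proof. by move=> HS; case: Hfan => _ [_ [H _]]; apply: H. Qed.

Lemma coneR_sub (S T : {set 'I_n}) (u : 'I_d -> RR) : S \subset T -> coneR b S u -> coneR b T u.
Proof.
move=> ST [lam [h1 [h2 h3]]]; exists lam; split=> //; split=> // i iT.
by apply: h2; apply: contra iT; exact: (subsetP ST).
Qed.

Lemma cone_incl (S T : {set 'I_n}) : S \in Sig -> T \in Sig ->
  (forall u, coneR b S u -> coneR b T u) -> S \subset T.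
Proof.
move=> HS HT H; apply/subsetP => j jS; apply/(fan_ray T j HT); apply: H.
exact/(fan_ray S j HS).
Qed.

Lemma setI_Sig (S T : {set 'I_n}) : S \in Sig -> T \in Sig ->
  S :&: T \in Sig /\ (forall u, coneR b (S :&: T) u <-> coneR b S u /\ coneR b T u).
Proof.
move=> HS HT; case: Hfan => _ [_ [_ [_ [Hface [Hint _]]]]].
have [F1 _] := Hint S T HS HT.
have [S' HS' HS'e] := Hface S HS _ F1.
have eq : S' = S :&: T.
  apply/setP => j; rewrite inE; apply/idP/andP.
  - move=> jS'; have [h1 h2] := proj1 (HS'e _) (proj2 (fan_ray S' j HS') jS').
    by split; [exact/(fan_ray S j HS) | exact/(fan_ray T j HT)].
  - case=> h1 h2; apply/(fan_ray S' j HS'); apply/HS'e.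
    by split; [exact/(fan_ray S j HS) | exact/(fan_ray T j HT)].
by subst.
Qed.

Lemma rpair_cone {u : 'I_d -> RR} {lam} :
  (forall k, u k = \sum_i lam i * breal b i k) ->
  forall m, rpair m u = \sum_i lam i * rpair m (breal b i).
Proof.
move=> Hu m; rewrite /rpair.
under eq_bigr do rewrite Hu big_distrr /=.
rewrite exchange_big /=; apply: eq_bigr => i _; rewrite big_distrr /=.
by apply: eq_bigr => k _; ring.
Qed.

Lemma face_int {S : {set 'I_n}} {m : lat d} : S \in Sig -> dualM b S m ->
  [set j in S | ipair m (b j) == 0] \in Sig.
Proof.
move=> HS Hm; case: Hfan => _ [_ [_ [_ [Hface _]]]].
pose mR : 'I_d -> RR := fun k => (m k)%:~R.
have Hr : forall j, rpair mR (breal b j) = (ipair m (b j))%:~R.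
  move=> j; rewrite /rpair /ipair rmorph_sum; apply: eq_bigr => k _.
  by rewrite rmorphM.
pose F u := coneR b S u /\ rpair mR u = 0.
have HF : faceR F (coneR b S).
  exists mR; split=> // u [lam [h1 [h2 h3]]]; rewrite (rpair_cone h3).
  apply: sumr_ge0 => i _; case: (boolP (i \in S)) => iS.
    by apply: mulr_ge0 => //; rewrite Hr ler0z; apply: Hm.
  by rewrite h2 // mul0r.
have [S' HS' HS'e] := Hface S HS F HF.
suff -> : [set j in S | ipair m (b j) == 0] = S' by [].
apply/setP => j; rewrite inE; apply/andP/idP.
  case=> jS /eqP h0; apply/(fan_ray S' j HS'); apply/HS'e; split.
    exact/(fan_ray S j HS).
  by rewrite Hr h0.
move=> jS'; have [h1 h2] := proj1 (HS'e _) (proj2 (fan_ray S' j HS') jS').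
split; first exact/(fan_ray S j HS).
by rewrite -(intr_eq0 RR) -Hr h2.
Qed.

Lemma min_cone (Z : {set 'I_n}) : (exists2 S, S \in Sig & Z \subset S) ->
  exists tau, [/\ tau \in Sig, Z \subset tau &
                  forall S, S \in Sig -> Z \subset S -> tau \subset S].
Proof.
case=> S0 HS0 HZ0.
pose P S := (S \in Sig) && (Z \subset S).
have P0 : P S0 by apply/andP.
case: (@arg_minnP _ S0 P (fun S : {set 'I_n} => #|S|) P0) => tau /andP[Htau HZ] Hmin.
exists tau; split=> // S HS HZS.
have [HI _] := setI_Sig tau S Htau HS.
have hle := Hmin (tau :&: S); move: hle; rewrite /P HI subsetI HZ HZS => /(_ isT) hle.
have := (subset_leqif_card (subsetIl tau S)).2.
rewrite eqn_leq hle subset_leq_card ?subsetIl // => /esym.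
by rewrite subsetI subxx.
Qed.

Lemma perp_tau (Z tau S : {set 'I_n}) (m : lat d) :
  (forall S, S \in Sig -> Z \subset S -> tau \subset S) ->
  S \in Sig -> Z \subset S -> dualM b S m ->
  (forall i, i \in Z -> ipair m (b i) = 0) -> forall i, i \in tau -> ipair m (b i) = 0.
Proof.
move=> Hmin HS HZ Hm H0 i itau.
have H'' := face_int HS Hm.
have : tau \subset [set j in S | ipair m (b j) == 0].
  apply: Hmin => //; apply/subsetP => j jZ; rewrite inE (subsetP HZ) //=.
  by rewrite H0.
by move/subsetP/(_ i itau); rewrite inE => /andP[_ /eqP].
Qed.

Lemma separate {S T : {set 'I_n}} {j : 'I_n} : S \in Sig -> T \in Sig -> j \in S -> j \notin T ->
  exists m : lat d, [/\ (forall i, i \in S -> 0 <= ipair m (b i)),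
     (forall i, i \in S -> i \in T -> ipair m (b i) = 0) & 0 < ipair m (b j)].
Proof.
move=> HS HT jS jT; case: Hfan => _ [_ [_ [_ [_ [Hint _]]]]].
have [[m0 [Hpos Hiff]] _] := Hint S T HS HT.
have [m [HE HP]] : exists m : lat d, (forall i, i \in S :&: T -> ipair m (b i) = 0) /\
                    (forall i, i \in S :\: T -> 0 < ipair m (b i)).
  apply: (@ratapprox d n b (S :&: T) (S :\: T) m0).
    move=> i; rewrite inE => /andP[iS iT].
    have := proj1 (Hiff (breal b i)); case.
      by split; [exact/(fan_ray S i HS) | exact/(fan_ray T i HT)].
    by [].
  move=> i; rewrite inE => /andP[iT iS].
  have h0 := Hpos _ (proj2 (fan_ray S i HS) iS).
  rewrite lt_def h0 andbT; apply/eqP => h.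
  have := proj2 (Hiff (breal b i)) (conj (proj2 (fan_ray S i HS) iS) h).
  by case=> _ /(fan_ray T i HT); rewrite (negbTE iT).
exists m; split.
- move=> i iS; case: (boolP (i \in T)) => iT.
    by rewrite HE // inE iS iT.
  by apply: ltW; apply: HP; rewrite inE iS iT.
- by move=> i iS iT; apply: HE; rewrite inE iS iT.
- by apply: HP; rewrite inE jS jT.
Qed.

Lemma no_ext {S T : {set 'I_n}} {j : 'I_n} {g h : lat d -> CCC} : S \in Sig -> T \in Sig -> j \in S -> j \notin T ->
  chart_pt b Sig (S :&: T) g -> (forall m, dualM b S m -> h m = g m) ->
  (forall m, dualM b S m -> 0 < ipair m (b j) -> h m = 0) -> False.
Proof.
move=> HS HT jS jT [_ g0 gM] Hhg Hh0.
have [m [Hpos H0 Hj]] := separate HS HT jS jT.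
have mS : dualM b S m by move=> i iS; apply: Hpos.
have m1 : dualM b (S :&: T) m.
  by move=> i; rewrite inE => /andP[iS iT]; rewrite H0.
have m2 : dualM b (S :&: T) (- m).
  by move=> i; rewrite inE => /andP[iS iT]; rewrite ipairN H0 // oppr0.
have := gM _ _ m1 m2; rewrite subrr g0 -Hhg // Hh0 // mul0r.
by move/eqP; rewrite oner_eq0.
Qed.

Lemma dualM_mono {A B : {set 'I_n}} {m : lat d} : A \subset B -> dualM b B m -> dualM b A m.
Proof. by move=> AB Hm i iA; apply: Hm; exact: (subsetP AB). Qed.

Lemma chart_mono (A B : {set 'I_n}) g : A \subset B -> B \in Sig ->
  chart_pt b Sig A g -> chart_pt b Sig B g.
Proof.
move=> AB HB [_ g0 gM]; split=> // m m' Hm Hm'.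
by apply: gM; [exact: (dualM_mono AB Hm) | exact: (dualM_mono AB Hm')].
Qed.

Lemma chart_q (S : {set 'I_n}) (x : 'I_n -> CCC) : S \in Sig ->
  (forall i, i \notin S -> x i != 0) -> chart_pt b Sig S (qcoord b x).
Proof.
move=> HS Hx; split=> //.
  by rewrite /qcoord big1 // => i _; rewrite ipair0 expr0z.
move=> m m' Hm Hm'; rewrite /qcoord -big_split /=; apply: eq_bigr => i _.
rewrite ipairD; case: (boolP (i \in S)) => iS.
  by apply: exprzD_ss; rewrite Hm // Hm'.
by apply: exprzDr; rewrite unitfE; apply: Hx.
Qed.

Lemma chiD (t : 'I_d -> CCC) (m m' : lat d) : (forall k, t k != 0) ->
  chi t (m + m') = chi t m * chi t m'.
Proof.
move=> Ht; rewrite /chi -big_split /=; apply: eq_bigr => k _.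
by rewrite ffD expfzDr.
Qed.

Lemma chi0 (t : 'I_d -> CCC) : chi t 0 = 1.
Proof. by rewrite /chi big1 // => k _; rewrite ff0 expr0z. Qed.

Lemma perpM_D (S : {set 'I_n}) (m m' : lat d) : dualM b S m -> dualM b S m' ->
  perpM b S (m + m') = perpM b S m && perpM b S m'.
Proof.
move=> Hm Hm'; rewrite /perpM.
apply/forall_inP/andP => [H|[/forall_inP H1 /forall_inP H2]].
  split; apply/forall_inP => i iS; have := H i iS;
    rewrite ipairD paddr_eq0 ?Hm ?Hm' // => /andP[h1 h2]; by [rewrite h1 | rewrite h2].
by move=> i iS; rewrite ipairD (eqP (H1 i iS)) (eqP (H2 i iS)) addr0.
Qed.

Lemma chart_orbit (sg : {set 'I_n}) (t : 'I_d -> CCC) : sg \in Sig ->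
  (forall k, t k != 0) -> chart_pt b Sig sg (orbit_pt b sg t).
Proof.
move=> Hs Ht; split=> //.
  rewrite /orbit_pt chi0 mul1r /gamma; case: ifP => // /negbT/negP[].
  by apply/forall_inP => i _; rewrite ipair0.
move=> m m' Hm Hm'; rewrite /orbit_pt chiD // /gamma perpM_D //.
by case: (perpM b sg m); case: (perpM b sg m'); rewrite /= ?mulr1 ?mulr0 ?mul0r //; ring.
Qed.

Lemma prodXz (I : finType) (F : I -> CCC) (z : int) : (forall i, F i != 0) ->
  (\prod_i F i) ^ z = \prod_i F i ^ z.
Proof.
move=> HF.
have : (\prod_i F i != 0) /\ (\prod_i F i) ^ z = \prod_i F i ^ z.
  apply: (big_ind2 (fun a c => a != 0 /\ a ^ z = c)).
  - by rewrite oner_eq0 exp1rz.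
  - move=> a1 c1 a2 c2 [h1 <-] [h2 <-]; split; first by rewrite mulf_neq0.
    by apply: exprzMl; rewrite unitfE.
  - by move=> i _; split.
by case.
Qed.

Lemma chi_T (w : 'I_n -> CCC) (m : lat d) : (forall i, w i != 0) ->
  chi (fun k => \prod_i w i ^ (b i k)) m = qcoord b w m.
Proof.
move=> Hw; rewrite /chi /qcoord.
rewrite (eq_bigr (fun k => \prod_i (w i ^ b i k) ^ m k)); last by move=> k _; apply: prodXz => i; apply: expfz_neq0.
under eq_bigr do under eq_bigr do rewrite exprz_exp.
rewrite exchange_big /=; apply: eq_bigr => i _.
have hm : {morph (fun e : int => w i ^ e) : a c / a + c >-> a * c} by move=> a c; exact: expfzDr.
rewrite -(big_morph _ hm (expr0z _)).
by congr (_ ^ _); apply: eq_bigr => k _; rewrite mulrC.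
Qed.

Lemma xhat_eval (S : {set 'I_n}) (x : 'I_n -> CCC) :
  (xhat S).@[x] = \prod_(i | i \notin S) x i.
Proof. by rewrite /xhat rmorph_prod; apply: eq_bigr => i _; exact: mevalXU. Qed.

Lemma poly_nonroot (P : {poly CCC}) : P != 0 -> exists s : CCC, s != 0 /\ P.[s] != 0.
Proof.
move=> HP.
pose rs := [seq (i.+1)%:R : CCC | i <- iota 0 (size P)].
have Hu : uniq rs.
  by rewrite map_inj_uniq ?iota_uniq // => i j /eqP; rewrite eqr_nat eqSS => /eqP.
case Hall: (all (root P) rs).
  by have := max_poly_roots HP Hall Hu; rewrite size_map size_iota ltnn.
move: Hall => /negbT/allPn [r /mapP [k _ ->] Hr].
by exists (k.+1)%:R; split=> //; rewrite pnatr_eq0.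
Qed.

Lemma meval_sumT (I : finType) (F : I -> {mpoly CCC[n]}) (x : 'I_n -> CCC) :
  (\sum_i F i).@[x] = \sum_i (F i).@[x].
Proof. by elim/big_rec2: _ => [|i y p _ <-]; rewrite ?meval0 ?mevalD. Qed.

Lemma meval_prodX (P : pred 'I_n) (x : 'I_n -> CCC) :
  (\prod_(i | P i) 'X_i).@[x] = \prod_(i | P i) x i.
Proof. by rewrite rmorph_prod; apply: eq_bigr => i _; exact: mevalXU. Qed.

Section Main.
Variables (sigma : {set 'I_n}) (x : 'I_n -> CCC) (tau : {set 'I_n}).
Hypothesis Hsig : sigma \in Sig.
Hypothesis Htau : tau \in Sig.
Hypothesis HZt : [set i | x i == 0] \subset tau.
Hypothesis Hmin : forall S, S \in Sig -> [set i | x i == 0] \subset S -> tau \subset S.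

Lemma xnz i : i \notin tau -> x i != 0.
Proof.
move=> it; apply/negP => /eqP hx; move/negP: it; apply.
by apply: (subsetP HZt); rewrite inE hx.
Qed.

Lemma stepA : inLtilde b Sig sigma x -> sigma \subset tau.
Proof.
case=> S0 HS0 [Hx0 [_ HV]].
have HZS0 : [set i | x i == 0] \subset S0.
  apply/subsetP => i; rewrite inE => hx; apply/negPn/negP => iS.
  by move: (Hx0 i iS); rewrite hx.
have tS0 := Hmin _ HS0 HZS0.
have Hq := chart_q _ _ Htau xnz.
have Hsame : same_pt b Sig tau (qcoord b x) S0 (qcoord b x).
  by exists (qcoord b x); split => //; rewrite (setIidPl tS0).
have Hreg : regular b tau [:: (1, 0)].
  by move=> c; rewrite inE => /eqP -> i _; rewrite /= ipair0.
have Hev : evalf [:: (1, 0)] (qcoord b x) != 0.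
  by case: Hq => _ h0 _; rewrite /evalf big_seq1 /= mul1r h0 oner_eq0.
have [t [Ht [ga [Hga [g3 [Hg3 Hga3 Horb3]] _]]]] := HV tau (qcoord b x) Hq Hsame _ Hreg Hev.
apply/subsetP => j js; apply/negPn/negP => jt.
apply: (no_ext (S := sigma) (T := tau) (j := j) (g := g3) (h := orbit_pt b sigma t) Hsig Htau js jt).
- by rewrite setIC.
- exact: Horb3.
- move=> m Hm Hj; rewrite /orbit_pt /gamma.
  suff -> : perpM b sigma m = false by rewrite mulr0.
  apply/negbTE/negP => /forall_inP/(_ j js)/eqP h.
  by move: Hj; rewrite h ltxx.
Qed.

Lemma stepB : sigma \subset tau -> in_VItilde b Sig sigma x.
Proof.
move=> st p Hp.
have [a [Ha ->]] := Hp tau Htau (fun u => coneR_sub _ _ _ st).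
rewrite meval_sumT big1 // => T _; rewrite mevalM.
case: (boolP [exists i, (i \in tau :\: T) && (x i == 0)]) => [/existsP [i /andP [iT xi]]|Hno].
  rewrite /xhat_rel meval_prodX (bigD1 i) //= (eqP xi) mul0r.
  by rewrite mulr0.
have Hni : ~ Igen_index b Sig tau sigma T.
  case=> HT _ _ Hns; apply: Hns => u hu.
  apply: (coneR_sub tau); last exact: (coneR_sub _ _ _ st).
  apply: Hmin => //; apply/subsetP => i; rewrite inE => xi.
  apply/negPn/negP => iT; move/existsP: Hno; apply; exists i.
  by rewrite inE iT xi (subsetP HZt) // inE.
by rewrite Ha // meval0 mul0r.
Qed.

Lemma stepC : in_VItilde b Sig sigma x -> sigma \subset tau.
Proof.
move=> HV; apply/subsetP => j js; apply/negPn/negP => jt.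
pose p : {mpoly CCC[n]} := \prod_(i | x i != 0) 'X_i.
have hp : p.@[x] != 0.
  by rewrite /p meval_prodX; apply/prodf_neq0 => i xi.
apply: (negP hp); apply/eqP; apply: HV => mu Hmu Hsm.
have [HI HIe] := setI_Sig _ _ Htau Hmu.
have nsub : ~ (forall u, coneR b sigma u -> coneR b (tau :&: mu) u).
  move=> H.
  have : sigma \subset tau.
    apply: cone_incl => // u hu; exact: (proj1 (proj1 (HIe u) (H u hu))).
  by move/subsetP/(_ j js); rewrite (negbTE jt).
exists (fun T => if T == tau :&: mu then \prod_(i | (x i != 0) && (i \notin mu :\: (tau :&: mu))) 'X_i else 0).
split.
  move=> T HT; case: eqP => // eT; exfalso; apply: HT; rewrite eT; split => //.
  - case: Hfan => _ [_ [_ [_ [_ [Hint _]]]]].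
    have [_ [m0 [h1 h2]]] := Hint tau mu Htau Hmu.
    by exists m0; split=> // u; rewrite HIe; exact: h2.
  - by move=> H; apply: nsub => u hu; apply/H; apply: Hsm.
rewrite (bigD1 (tau :&: mu)) //= eqxx [X in _ + X]big1 ?addr0 => [|T hT]; last by rewrite ifN ?mul0r.
rewrite /p /xhat_rel (bigID (fun i => i \in mu :\: (tau :&: mu))) /= mulrC; congr (_ * _).
apply: eq_bigl => i; case: (boolP (i \in mu :\: (tau :&: mu))) => hi; rewrite ?andbT ?andbF //.
apply: xnz; apply/negP => it; move: hi; rewrite !inE it /=.
by case: (i \in mu).
Qed.

Lemma stepD : sigma \subset tau -> inLtilde b Sig sigma x.
Proof.
move=> st; exists tau => //; split; first exact: xnz.
split; first exact: (chart_q _ _ Htau xnz).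
move=> S' g' Hg' [g'' [Hg'' Hgg'' Hqg'']] f Hf Hfg.
have HS' : S' \in Sig by case: Hg'.
have ZS' : [set i | x i == 0] \subset S'.
  apply/subsetP => j jZ; apply/negPn/negP => jS'.
  apply: (no_ext (S := tau) (T := S') (j := j) (g := g'') (h := qcoord b x) Htau HS' (subsetP HZt j jZ) jS').
  - by rewrite setIC.
  - exact: Hqg''.
  - move=> m Hm Hj; rewrite /qcoord (bigD1 j) //=; move: jZ; rewrite inE => /eqP ->.
    by rewrite exp0rz (gt_eqF Hj) /= mul0r.
have tS' := Hmin _ HS' ZS'.
have sS' := subset_trans st tS'.
have Hg'q : forall m, dualM b S' m -> g' m = qcoord b x m.
  by move=> m Hm; rewrite Hgg'' // -Hqg'' //; exact: (dualM_mono tS' Hm).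
pose A (m : lat d) := \prod_(i | x i != 0) x i ^ ipair m (b i).
pose K (m : lat d) := (\sum_(i | x i == 0%R) `|ipair m (b i)|)%N.
pose w (s : CCC) i := if x i == 0 then s else x i.
have Hqw : forall s m, dualM b S' m -> qcoord b (w s) m = A m * s ^+ K m.
  move=> s m Hm; rewrite /qcoord (bigID (fun i => x i == 0)) /= mulrC; congr (_ * _).
    by apply: eq_bigr => i /negbTE xi; rewrite /w xi.
  rewrite /K -prodrXr; apply: eq_bigr => i xi; rewrite /w xi.
  have h : 0 <= ipair m (b i) by apply: Hm; apply: (subsetP ZS'); rewrite inE.
  by rewrite -{1}(gez0_abs h).
have Hqx : forall m, qcoord b x m = qcoord b (w 0) m.
  by move=> m; apply: eq_bigr => i _; rewrite /w; case: eqP => // ->.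
have Hgam : forall m, dualM b S' m -> K m = 0%N -> gamma b sigma m = 1.
  move=> m Hm HK; rewrite /gamma ifT //; apply/forall_inP => i iS; apply/eqP.
  apply: (perp_tau _ _ _ _ Hmin HS' ZS' Hm); last exact: (subsetP st).
  move=> k; rewrite inE => xk; apply/eqP; rewrite -absz_eq0.
  by move/eqP: HK; rewrite sum_nat_eq0 => /forall_inP/(_ k xk).
pose P : {poly CCC} := \sum_(c <- f) (c.1 * gamma b sigma c.2 * A c.2) *: 'X^(K c.2).
have HPs : forall s, P.[s] = \sum_(c <- f) c.1 * gamma b sigma c.2 * A c.2 * s ^+ K c.2.
  by move=> s; rewrite /P horner_sum; apply: eq_bigr => c _; rewrite hornerZ hornerXn.
have HP0 : P.[0] = evalf f g'.
  rewrite HPs /evalf big_seq [RHS]big_seq; apply: eq_bigr => c cf.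
  have Hc := Hf c cf.
  rewrite Hg'q // Hqx Hqw //.
  case: (eqVneq (K c.2) 0%N) => hK.
    by rewrite (Hgam _ Hc hK); ring.
  by rewrite expr0n (negbTE hK) !mulr0.
have HPnz : P != 0.
  by apply/negP => /eqP HP; move: Hfg; rewrite -HP0 HP horner0 eqxx.
have [s [Hs HPs']] := poly_nonroot _ HPnz.
have Hw : forall i, w s i != 0 by move=> i; rewrite /w; case: ifP => // /negbT.
pose t := fun k => \prod_i w s i ^ (b i k).
have Ht : forall k, t k != 0.
  by move=> k; apply/prodf_neq0 => i _; apply: expfz_neq0.
exists t; split => //; exists (orbit_pt b sigma t); split.
- exact: (chart_mono _ _ _ sS' HS' (chart_orbit _ _ Hsig Ht)).
- exists (orbit_pt b sigma t); split => //; rewrite (setIidPr sS'); exact: chart_orbit.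
- rewrite /evalf; suff -> : \sum_(c <- f) c.1 * orbit_pt b sigma t c.2 = P.[s] by [].
  rewrite HPs big_seq [RHS]big_seq; apply: eq_bigr => c cf.
  rewrite /orbit_pt /t (chi_T _ _ Hw) Hqw //; last exact: Hf.
  ring.
Qed.

End Main.

End Fan.

Theorem proposition3p7 (d n : nat) (b : 'I_n -> lat d) (Sig : {set {set 'I_n}})
    (sigma : {set 'I_n}) :
  is_fan b Sig -> sigma \in Sig ->
  forall x : 'I_n -> CCC, inXtilde Sig x ->
    (inLtilde b Sig sigma x <-> in_VItilde b Sig sigma x).
Proof.
move=> Hfan Hsig x HX.
have : [exists S in Sig, (xhat S).@[x] != 0].
  case: (boolP [exists S in Sig, (xhat S).@[x] != 0]) => // /exists_inPn H.
  exfalso; apply: HX => S HS; apply/eqP.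
  by move: (H S HS); rewrite negbK.
case/exists_inP => S HS HxS.
have HZS : [set i | x i == 0] \subset S.
  apply/subsetP => i; rewrite inE => xi; apply/negPn/negP => iS; move: HxS.
  by rewrite xhat_eval (bigD1 i) //= (eqP xi) mul0r eqxx.
have [tau [Htau HZt Hmin]] := @min_cone _ _ _ _ Hfan _ (ex_intro2 _ _ S HS HZS).
split.
  move=> HL; apply: (@stepB _ _ _ _ sigma x tau Htau HZt Hmin).
  exact: (@stepA _ _ _ _ Hfan sigma x tau Hsig Htau HZt Hmin HL).
move=> HV; apply: (@stepD _ _ _ _ Hfan sigma x tau Hsig Htau HZt Hmin).
exact: (@stepC _ _ _ _ Hfan sigma x tau Hsig Htau HZt HV).
Qed.
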